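(* Let $S$ be a set of $n$ points in $\mathbb{R}^D$, let $t\geqslant 1$ be a real number, let $G$ be a $t$-spanner for $S$, and let $T$ be a minimum spanning tree of $G$. Let $m$ be an integer with $1\leqslant m\leqslant n-1$, and let $T'$ and $T''$ be two vertex-disjoint subtrees (connected subgraphs) of $T$, each consisting of at most $m$ vertices. Let $p$ be a vertex of $T'$, let $q$ be a vertex of $T''$, and let $\gamma$ be the path in $T$ between $p$ and $q$. If $x$ is a vertex of $T'$ lying on the subpath of $\gamma$ within $T'$, and $y$ is a vertex of $T''$ lying on the subpath of $\gamma$ within $T''$, then $$d(x,y)\leqslant \big(2t(m-1)+1\big)\cdot d(p,q).$$
   Context: $d(u,v)$ denotes Euclidean distance. For a graph $G$ with vertex set $S\subset\mathbb{R}^D$, each edge $(u,v)$ has weight (length) $d(u,v)$ and $d_G(u,v)$ is the length of a shortest path in $G$ between $u$ and $v$. $G$ is a $t$-spanner for $S$ if its vertex set is $S$ and $d_G(u,v)\leqslant t\cdot d(u,v)$ for all $u,v\in S$. A minimum spanning tree of $G$ is a spanning tree of $G$ (using only edges of $G$) of minimum total edge weight. *)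

(* Defs.v *)
From HB Require Import structures.
From mathcomp Require Import all_boot all_order all_algebra.
Set Implicit Arguments. Unset Strict Implicit. Unset Printing Implicit Defensive.
Import Order.TTheory GRing.Theory Num.Theory.
Local Open Scope ring_scope.

Section Defs.
Variables (R : rcfType) (D : nat) (V : finType) (pt : V -> 'rV[R]_D).

Definition edist (u v : 'rV[R]_D) : R :=
  Num.sqrt (\sum_(i < D) (u ord0 i - v ord0 i) ^+ 2).

Definition vdist (u v : V) : R := edist (pt u) (pt v).

Definition walk_len (u : V) (s : seq V) : R :=
  \sum_(e <- zip (u :: s) s) vdist e.1 e.2.

Definition is_walk (E : rel V) (u v : V) (s : seq V) : bool :=
  path E u s && (last u s == v).

Definition simple_graph (E : rel V) : Prop :=
  (forall u v, E u v = E v u) /\ (forall u, ~~ E u u).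

(* G is a t-spanner: d_G(u,v) <= t d(u,v), i.e. some path realizes this bound *)
Definition t_spanner (t : R) (G : rel V) : Prop :=
  forall u v, exists s, is_walk G u v s /\ walk_len u s <= t * vdist u v.

Definition connected_graph (E : rel V) : Prop := forall u v, connect E u v.

Definition acyclic (E : rel V) : Prop :=
  forall c : seq V, uniq c -> (3 <= size c)%N -> ~~ cycle E c.

(* total weight of the (undirected) edge set of E *)
Definition weight (E : rel V) : R :=
  \sum_(e : V * V | E e.1 e.2 && (enum_rank e.1 < enum_rank e.2)%N) vdist e.1 e.2.

Definition spanning_tree (G T : rel V) : Prop :=
  simple_graph T /\ (forall u v, T u v -> G u v) /\ connected_graph T /\ acyclic T.

Definition is_MST (G T : rel V) : Prop :=
  spanning_tree G T /\ forall T2, spanning_tree G T2 -> weight T <= weight T2.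

(* vertex set of a connected subgraph (subtree) of T *)
Definition subtree (T : rel V) (A : {set V}) : Prop :=
  forall x y, x \in A -> y \in A ->
    connect (fun a b => [&& T a b, a \in A & b \in A]) x y.

End Defs.

(* Main.v *)
Set Warnings "-all".
Require Import Defs.
From HB Require Import structures.
From mathcomp Require Import all_boot all_order all_algebra.
From mathcomp Require Import ring lra.
Set Implicit Arguments. Unset Strict Implicit. Unset Printing Implicit Defensive.
Import Order.TTheory GRing.Theory Num.Theory.
Local Open Scope ring_scope.

Section Graph.
Variable V : finType.

Definition edge (u w x y : V) : bool := ((x == u) && (y == w)) || ((x == w) && (y == u)).
Definition rm (T : rel V) (u w : V) : rel V := fun x y => T x y && ~~ edge u w x y.

Lemma edge_sym u w x y : edge u w x y = edge u w y x.
Proof. by rewrite /edge; case: (x == u); case: (y == w); case: (x == w); case: (y == u). Qed.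

Lemma rm_sym T u w : (forall x y, T x y = T y x) -> forall x y, rm T u w x y = rm T u w y x.
Proof. by move=> hs x y; rewrite /rm hs edge_sym. Qed.

Lemma csym (E : rel V) : (forall x y, E x y = E y x) -> forall x y, connect E x y = connect E y x.
Proof. by move=> hs; apply: sym_connect_sym => x y; apply: hs. Qed.

Lemma edge_lemma T u w : simple_graph T -> acyclic T -> T u w -> ~~ connect (rm T u w) u w.
Proof.
move=> [Ts Ti] Ta Tuw; apply/negP => /connectP [s Ps Hl].
move: Hl; case: (shortenP Ps) => s' Ps' U' _ Hl.
have Ps2 : path T u s' by apply: sub_path Ps' => x y /andP[].
case: s' Ps' U' Hl Ps2 => [|v [|v2 s'']] Ps' U' Hl Ps2.
- by move: Tuw; rewrite /= in Hl; rewrite Hl (negbTE (Ti u)).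
- by move: Ps'; rewrite /= in Hl; rewrite /= -Hl /rm /edge !eqxx /= andbF.
have := Ta _ U' isT; apply/negP/negPn.
by rewrite /cycle rcons_path Ps2 -Hl Ts.
Qed.

Lemma Lsplit T p s1 w s2 a b : simple_graph T -> acyclic T ->
  path T p (s1 ++ w :: s2) -> uniq (p :: s1 ++ w :: s2) ->
  a \in p :: s1 -> b \in w :: s2 -> ~~ connect (rm T (last p s1) w) a b.
Proof.
move=> [Ts Ti] Ta; set u := last p s1.
rewrite cat_path => /andP [P1 /andP [Tuw P2]].
rewrite -cat_cons cat_uniq => /and3P [U1 Hn U2] ain bin.
have uin : u \in p :: s1 by apply: mem_last.
have wn : w \notin p :: s1.
  by apply/negP => win; move/hasP: Hn; apply; exists w => //; apply: mem_head.
have un : u \notin w :: s2.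
  by apply/negP => uin2; move/hasP: Hn; apply; exists u.
have H1 : path (rm T u w) p s1.
  apply: (sub_in_path (P := mem (p :: s1))); last exact: P1.
    move=> x y xin yin Txy; rewrite /rm Txy /edge /=.
    by apply/negP => /orP [/andP [_ /eqP E]|/andP [/eqP E _]]; move: wn; rewrite -E ?xin ?yin.
  by apply/allP.
have H2 : path (rm T u w) w s2.
  apply: (sub_in_path (P := mem (w :: s2))); last exact: P2.
    move=> x y xin yin Txy; rewrite /rm Txy /edge /=.
    by apply/negP => /orP [/andP [/eqP E _]|/andP [_ /eqP E]]; move: un; rewrite -E ?xin ?yin.
  by apply/allP.
have sy := csym (rm_sym u w Ts).
apply/negP => Cab.
have := edge_lemma (conj Ts Ti) Ta Tuw; apply/negP/negPn.
apply: (connect_trans (y := p)); first by rewrite sy; exact: path_connect H1 _ uin.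
apply: (connect_trans (y := a)); first exact: path_connect H1 _ ain.
apply: (connect_trans (y := b)) => //.
by rewrite sy; exact: path_connect H2 _ bin.
Qed.

Lemma Pref T (A : {set V}) p s : simple_graph T -> acyclic T ->
  path T p s -> uniq (p :: s) ->
  connect (fun a b => [&& T a b, a \in A & b \in A]) p (last p s) -> all (mem A) s.
Proof.
move=> Tsg Ta Ps U C; apply/allP => v vin.
move: Ps U C; case/splitPr: vin => s1 s2 Ps U C.
apply/negPn/negP => vA.
rewrite last_cat /= in C.
have := Lsplit (a := p) (b := last v s2) Tsg Ta Ps U (mem_head _ _).
rewrite mem_last => /(_ isT) /negP; apply.
apply: connect_sub C => x y /and3P [Txy xA yA]; apply: connect1.
rewrite /rm Txy /edge /=; apply/negP => /orP [/andP [_ /eqP E]|/andP [/eqP E _]];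
  by move: vA; rewrite -E => /negP H; apply: H.
Qed.

Lemma zip_split (p a b : V) s : (a, b) \in zip (p :: s) s ->
  exists s1 s2, s = s1 ++ b :: s2 /\ a = last p s1.
Proof.
elim: s p => [|v s IH] p //=.
rewrite in_cons => /orP [/eqP [-> ->]|/IH [s1 [s2 [-> ->]]]].
  by exists [::], s.
by exists (v :: s1), s2.
Qed.

Lemma closure_connect (e : rel V) (P : pred V) x y :
  (forall u v, P u -> e u v -> P v) -> P x -> connect e x y -> P y.
Proof.
move=> cl Px /connectP [s Ps ->]; elim: s x Px Ps => [|v s IH] x Px //= /andP [exv Ps].
exact: IH (cl _ _ Px exv) Ps.
Qed.

Lemma cross (e : rel V) (P : pred V) x s : path e x s -> P x -> ~~ P (last x s) ->
  exists c d, [/\ (c, d) \in zip (x :: s) s, e c d, P c & ~~ P d].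
Proof.
elim: s x => [|v s IH] x /=; first by move=> _ ->.
move=> /andP [exv Ps] Px Pl.
case Pv: (P v).
  have [c [d [H1 H2 H3 H4]]] := IH v Ps Pv Pl.
  by exists c, d; rewrite in_cons H1 orbT.
by exists x, v; rewrite in_cons eqxx Pv.
Qed.

Lemma path_mid (e e' : rel V) (P : pred V) :
  (forall u v, e u v -> P u || P v -> e' u v) ->
  forall x s y, s != [::] -> all P s -> path e x (rcons s y) -> path e' x (rcons s y).
Proof.
move=> H x s; elim: s x => [|v s IH] x y //= _ /andP [Pv As] /andP [exv Ps].
rewrite (H _ _ exv) ?Pv ?orbT //=.
case: s IH As Ps => [|v2 s] IH As Ps.
  by move: Ps => /= /andP [evy _]; rewrite (H _ _ evy) ?Pv.
exact: IH.
Qed.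

Lemma in_split_last (x p : V) g : x \in p :: g -> exists g1 g2, g = g1 ++ g2 /\ x = last p g1.
Proof.
rewrite in_cons => /orP [/eqP -> | xg]; first by exists [::], g.
case/splitPr: xg => s1 s2; exists (rcons s1 x), s2; by rewrite cat_rcons last_rcons.
Qed.

End Graph.
Section Euclid.
Variables (R : rcfType) (D : nat).

Lemma lagrange (a b : 'I_D -> R) :
  \sum_i \sum_j (a i * b j - a j * b i) ^+ 2 =
  2 * ((\sum_i a i ^+ 2) * (\sum_i b i ^+ 2) - (\sum_i a i * b i) ^+ 2).
Proof.
have E : forall i j, (a i * b j - a j * b i) ^+ 2 =
   a i ^+ 2 * b j ^+ 2 + a j ^+ 2 * b i ^+ 2 - 2 * ((a i * b i) * (a j * b j)).
  by move=> i j; ring.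
under eq_bigr => i _ do under eq_bigr => j _ do rewrite E.
have -> : \sum_i \sum_j (a i ^+ 2 * b j ^+ 2 + a j ^+ 2 * b i ^+ 2 - 2 * ((a i * b i) * (a j * b j)))
  = \sum_i \sum_j (a i ^+ 2 * b j ^+ 2) + \sum_i \sum_j (a j ^+ 2 * b i ^+ 2)
    - 2 * \sum_i \sum_j ((a i * b i) * (a j * b j)).
  rewrite mulr_sumr -big_split -sumrB /=; apply: eq_bigr => i _.
  by rewrite mulr_sumr -big_split -sumrB.
have HX : \sum_i \sum_j a i ^+ 2 * b j ^+ 2 = (\sum_i a i ^+ 2) * (\sum_i b i ^+ 2).
  rewrite mulr_suml; apply: eq_bigr => i _; by rewrite mulr_sumr.
have HY : \sum_i \sum_j a j ^+ 2 * b i ^+ 2 = (\sum_i a i ^+ 2) * (\sum_i b i ^+ 2).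
  by rewrite exchange_big.
have HZ : \sum_i \sum_j (a i * b i) * (a j * b j) = (\sum_i a i * b i) ^+ 2.
  rewrite expr2 mulr_suml; apply: eq_bigr => i _; by rewrite mulr_sumr.
rewrite HX HY HZ; ring.
Qed.

Lemma cauchy_schwarz (a b : 'I_D -> R) :
  \sum_i a i * b i <= Num.sqrt (\sum_i a i ^+ 2) * Num.sqrt (\sum_i b i ^+ 2).
Proof.
have hA : 0 <= \sum_i a i ^+ 2 by apply: sumr_ge0 => i _; exact: sqr_ge0.
have hB : 0 <= \sum_i b i ^+ 2 by apply: sumr_ge0 => i _; exact: sqr_ge0.
have L : 0 <= \sum_i \sum_j (a i * b j - a j * b i) ^+ 2.
  by apply: sumr_ge0 => i _; apply: sumr_ge0 => j _; exact: sqr_ge0.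
rewrite lagrange in L.
rewrite -sqrtrM //.
apply: le_trans (ler_norm _) _.
rewrite -sqrtr_sqr; apply: ler_wsqrtr; lra.
Qed.

Lemma triangle (u v w : 'rV[R]_D) :
  Num.sqrt (\sum_i (u ord0 i - w ord0 i) ^+ 2) <=
  Num.sqrt (\sum_i (u ord0 i - v ord0 i) ^+ 2) + Num.sqrt (\sum_i (v ord0 i - w ord0 i) ^+ 2).
Proof.
set a := fun i => u ord0 i - v ord0 i.
set b := fun i => v ord0 i - w ord0 i.
have -> : \sum_i (u ord0 i - w ord0 i) ^+ 2 =
   \sum_i a i ^+ 2 + 2 * \sum_i a i * b i + \sum_i b i ^+ 2.
  rewrite mulr_sumr -!big_split /=; apply: eq_bigr => i _; rewrite /a /b; ring.
have cs := cauchy_schwarz a b.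
have hA : 0 <= \sum_i a i ^+ 2 by apply: sumr_ge0 => i _; exact: sqr_ge0.
have hB : 0 <= \sum_i b i ^+ 2 by apply: sumr_ge0 => i _; exact: sqr_ge0.
have sA := sqr_sqrtr hA. have sB := sqr_sqrtr hB.
have p1 := sqrtr_ge0 (\sum_i a i ^+ 2). have p2 := sqrtr_ge0 (\sum_i b i ^+ 2).
rewrite -[X in _ <= X]ger0_norm ?addr_ge0 // -sqrtr_sqr; apply: ler_wsqrtr.
move: cs sA sB; set x := Num.sqrt _; set y := Num.sqrt _ => cs sA sB.
rewrite -sA -sB; nra.
Qed.
End Euclid.

Section Metric.
Variables (R : rcfType) (D : nat) (V : finType) (pt : V -> 'rV[R]_D).

Lemma vdist_ge0 x y : 0 <= vdist pt x y.
Proof. exact: sqrtr_ge0. Qed.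

Lemma vdist_sym x y : vdist pt x y = vdist pt y x.
Proof.
rewrite /vdist /edist; congr Num.sqrt; apply: eq_bigr => i _.
by rewrite -opprB sqrrN.
Qed.

Lemma vdist_xx x : vdist pt x x = 0.
Proof.
rewrite /vdist /edist big1 ?sqrtr0 // => i _; by rewrite subrr expr0n.
Qed.

Lemma vdist_tri x y z : vdist pt x z <= vdist pt x y + vdist pt y z.
Proof. exact: triangle. Qed.

Lemma walk_len_nil u : walk_len pt u [::] = 0.
Proof. by rewrite /walk_len big_nil. Qed.

Lemma walk_len_cons u v s : walk_len pt u (v :: s) = vdist pt u v + walk_len pt v s.
Proof. by rewrite /walk_len /= big_cons. Qed.

Lemma walk_tri u s : vdist pt u (last u s) <= walk_len pt u s.
Proof.
elim: s u => [|v s IH] u /=; first by rewrite vdist_xx walk_len_nil.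
rewrite walk_len_cons; apply: le_trans (vdist_tri u v _) _.
by rewrite lerD2l.
Qed.

Lemma walk_bound u s K : (forall e, e \in zip (u :: s) s -> vdist pt e.1 e.2 <= K) ->
  walk_len pt u s <= (size s)%:R * K.
Proof.
elim: s u => [|v s IH] u H /=; first by rewrite walk_len_nil mul0r.
rewrite walk_len_cons -addn1 natrD mulrDl mul1r addrC lerD //.
  by apply: IH => e ein; apply: H; rewrite /= in_cons ein orbT.
by apply: (H (u, v)); rewrite /= in_cons eqxx.
Qed.

Lemma walk_elem u s c d : (c, d) \in zip (u :: s) s -> vdist pt c d <= walk_len pt u s.
Proof.
elim: s u => [|v s IH] u //=; rewrite in_cons walk_len_cons => /orP [/eqP [-> ->]|H].
  by rewrite lerDl /walk_len sumr_ge0 // => e _; exact: vdist_ge0.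
by apply: le_trans (IH _ H) _; rewrite lerDr vdist_ge0.
Qed.

Lemma pair_sum a b : a != b ->
  \sum_(e : V * V | edge a b e.1 e.2 && (enum_rank e.1 < enum_rank e.2)%N) vdist pt e.1 e.2
  = vdist pt a b.
Proof.
move=> ab.
have rn : enum_rank a != enum_rank b.
  by apply: contra ab => /eqP /enum_rank_inj ->.
wlog lt : a b ab rn / (enum_rank a < enum_rank b)%N.
  move=> W; case: (ltngtP (enum_rank a) (enum_rank b)) => [lt|gt|eq].
  - exact: W.
  - rewrite vdist_sym -W 1?eq_sym //; apply: eq_bigl => [[x y]] /=.
    by rewrite /edge orbC.
  - by move/val_inj: eq => eq; rewrite eq eqxx in rn.
rewrite (big_pred1 (a, b)) // => [[x y]] /=.
apply/andP/eqP => [[/orP [/andP [/eqP -> /eqP ->] // | /andP [/eqP -> /eqP ->]] r] | [-> ->]].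
  by move: (ltn_trans lt r); rewrite ltnn.
by rewrite /edge !eqxx.
Qed.

Lemma sum4 (P1 P2 P3 P4 : pred (V * V)) (F : V * V -> R) :
  (forall i, (P1 i : nat) + P2 i = (P3 i : nat) + P4 i)%N ->
  \sum_(i | P1 i) F i + \sum_(i | P2 i) F i = \sum_(i | P3 i) F i + \sum_(i | P4 i) F i.
Proof.
move=> H; rewrite (big_mkcond P1) (big_mkcond P2) (big_mkcond P3) (big_mkcond P4).
rewrite -!big_split; apply: eq_bigr => i _ /=; move: (H i).
by case: (P1 i); case: (P2 i); case: (P3 i); case: (P4 i); rewrite //= ?addr0 ?add0r.
Qed.

Lemma weight_exchange (T T2 : rel V) a b c d :
  (forall x y, T2 x y = rm T a b x y || edge c d x y) ->
  (forall x y, T x y = T y x) -> T a b -> ~~ T c d -> a != b -> c != d ->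
  weight pt T2 + vdist pt a b = weight pt T + vdist pt c d.
Proof.
move=> H2 Ts Tab Tcd ab cd.
rewrite -{1}(pair_sum ab) -(pair_sum cd) /weight.
set r := fun e : V * V => (enum_rank e.1 < enum_rank e.2)%N.
apply: (@sum4 (fun e => T2 e.1 e.2 && r e) (fun e => edge a b e.1 e.2 && r e)
   (fun e => T e.1 e.2 && r e) (fun e => edge c d e.1 e.2 && r e)).
move=> e; rewrite H2 /rm; move: e.1 e.2 (r e) => x y re.
have h1 : edge a b x y -> T x y.
  by rewrite /edge => /orP [/andP [/eqP -> /eqP ->] | /andP [/eqP -> /eqP ->]] //; rewrite Ts.
have h2 : edge c d x y -> T x y = false.
  by rewrite /edge => /orP [/andP [/eqP -> /eqP ->] | /andP [/eqP -> /eqP ->]];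
    [apply/negbTE | rewrite Ts; apply/negbTE].
case: re; rewrite ?andbT ?andbF //.
move: h1 h2; case: (edge a b x y); case: (edge c d x y); case: (T x y) => h1 h2 //=;
  by [have := h1 isT | have := h2 isT].
Qed.

Lemma EB (G T : rel V) (t : R) a b p q : simple_graph G -> t_spanner pt t G ->
  is_MST pt G T -> T a b -> ~~ connect (rm T a b) p q -> vdist pt a b <= t * vdist pt p q.
Proof.
move=> [Gs Gi] Gsp [[[Ts Ti] [TG [Tc Ta]]] Mst] Tab Npq.
set Tm := rm T a b.
have Tms : forall x y, Tm x y = Tm y x := rm_sym a b Ts.
have sy := csym Tms.
have ab : a != b by apply/eqP => E; move: Tab; rewrite E (negbTE (Ti b)).
have sides : forall u, connect Tm a u || connect Tm b u.
  move=> u; apply: (closure_connect (e := T) (x := a) (P := fun u => connect Tm a u || connect Tm b u)) (Tc a u); last by rewrite connect0.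
  move=> v w Hv Tvw; case E: (edge a b v w).
    by move: E; rewrite /edge => /orP [/andP [_ /eqP ->]|/andP [_ /eqP ->]]; rewrite connect0 ?orbT.
  have Tmvw : Tm v w by rewrite /Tm /rm Tvw E.
  case/orP: Hv => Hv.
    by rewrite (connect_trans Hv (connect1 Tmvw)).
  by rewrite (connect_trans Hv (connect1 Tmvw)) orbT.
have [s [/andP [Ps /eqP Ls] Ws]] := Gsp p q.
have Hq : ~~ connect Tm p (last p s) by rewrite Ls.
have [c [d [Zcd Gcd Pc Pd]]] := cross (P := connect Tm p) Ps (connect0 _ p) Hq.
have Hcd : vdist pt c d <= t * vdist pt p q := le_trans (walk_elem Zcd) Ws.
apply: le_trans Hcd.
case Ecd: (edge a b c d).
  by move: Ecd; rewrite /edge => /orP [/andP [/eqP -> /eqP ->]|/andP [/eqP -> /eqP ->]];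
    rewrite ?[vdist pt b a]vdist_sym ?lexx.
have Tcd : ~~ T c d.
  apply/negP => Tcd; move/negP: Pd; apply; apply: connect_trans Pc (connect1 _).
  by rewrite /Tm /rm Tcd Ecd.
have cd : c != d by apply/eqP => E; move: Gcd; rewrite E (negbTE (Gi d)).
pose T2 := fun x y => Tm x y || edge c d x y.
have T2s : forall x y, T2 x y = T2 y x by move=> x y; rewrite /T2 Tms edge_sym.
have sy2 := csym T2s.
have sub : forall x y, connect Tm x y -> connect T2 x y.
  by apply: connect_sub => x y H; apply: connect1; rewrite /T2 H.
have ecd : connect T2 c d by apply: connect1; rewrite /T2 /edge !eqxx /= orbT.
have ST : spanning_tree G T2.
  split; [split|split; [|split]].
  - exact: T2s.
  - move=> x; rewrite /T2 /Tm /rm (negbTE (Ti x)) /= /edge.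
    by apply/negP => /orP [/andP [/eqP E1 /eqP E2]|/andP [/eqP E1 /eqP E2]];
      move: cd; rewrite -E1 -E2 eqxx.
  - move=> x y /orP [/andP [Txy _]|]; first exact: TG.
    by rewrite /edge => /orP [/andP [/eqP -> /eqP ->]|/andP [/eqP -> /eqP ->]] //; rewrite Gs.
  - have ab2 : connect T2 a b.
      case/orP: (sides p) => Hp.
        have Hd : connect Tm b d.
          case/orP: (sides d) => // Had; exfalso; move/negP: Pd; apply.
          by apply: connect_trans Had; rewrite sy.
        apply: connect_trans (sub _ _ (connect_trans Hp Pc)) _.
        by apply: connect_trans ecd _; apply: sub; rewrite sy.
      have Hd : connect Tm a d.
        case/orP: (sides d) => // Hbd; exfalso; move/negP: Pd; apply.
        by apply: connect_trans Hbd; rewrite sy.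
      rewrite sy2; apply: connect_trans (sub _ _ (connect_trans Hp Pc)) _.
      by apply: connect_trans ecd _; apply: sub; rewrite sy.
    have au : forall u, connect T2 a u.
      by move=> u; case/orP: (sides u) => H; [exact: sub H | exact: connect_trans ab2 (sub _ _ H)].
    by move=> u v; apply: connect_trans (au v); rewrite sy2.
  - move=> C U S; apply/negP => Cy.
    case: (boolP ((c \in C) && (d \in C))) => [/andP [cC dC]|ncd].
      case: (rot_to cC) => i s' Hr.
      have Cy' : cycle T2 (c :: s') by rewrite -Hr rot_cycle.
      have U' : uniq (c :: s') by rewrite -Hr rot_uniq.
      have S' : (3 <= size (c :: s'))%N by rewrite -Hr size_rot.
      have ds' : d \in s'.
        by move: dC; rewrite -(mem_rot i) Hr in_cons eq_sym (negbTE cd).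
      move: Cy' U' S'; case/splitPr: ds' => s1 s2 Cy' U' S'.
      have Hmid : forall u v, T2 u v -> ((u != c) && (u != d)) || ((v != c) && (v != d)) -> Tm u v.
        move=> u v /orP [//|]; rewrite /edge.
        by move=> /orP [/andP [/eqP -> /eqP ->]|/andP [/eqP -> /eqP ->]]; rewrite !eqxx ?andbF.
      move: U'; rewrite /= mem_cat in_cons negb_or negb_or => /andP [/and3P [c1 cd' c2] U2].
      move: U2; rewrite cat_uniq /= => /and4P [U1 /norP [d1 _] d2 _].
      have CTm : connect Tm c d.
        case: s1 Cy' c1 d1 U1 S' => [|v1 s1] Cy' c1 d1 U1 S'.
          move: Cy'; rewrite /cycle /= => /andP [_ P2].
          case: s2 P2 c2 d2 S' => [//|v2 s2] P2 c2 d2 S'.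
          have P3 : path Tm d (rcons (v2 :: s2) c).
            apply: (path_mid Hmid) => //; apply/allP => z zin.
            by apply/andP; split; apply/negP => /eqP E; [move: c2 | move: d2]; rewrite -E zin.
          rewrite sy; apply: (path_connect P3); by rewrite in_cons mem_rcons mem_head orbT.
        move: Cy'; rewrite /cycle rcons_cat cat_path => /andP [P1 P2].
        have P3 : path Tm c (rcons (v1 :: s1) d).
          apply: (path_mid Hmid) => //.
            apply/allP => z zin.
            by apply/andP; split; apply/negP => /eqP E; [move: c1 | move: d1]; rewrite -E zin.
          by rewrite rcons_path P1; move: P2 => /= /andP [].
        by apply: (path_connect P3); rewrite in_cons mem_rcons mem_head orbT.
      by move/negP: Pd; apply; apply: connect_trans Pc CTm.
    have CT : cycle T C.
      apply: (sub_in_cycle (P := mem C)) Cy; last by apply/allP.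
      move=> x y xC yC /orP [/andP [Txy _] //|].
      rewrite /edge => /orP [/andP [/eqP Ex /eqP Ey]|/andP [/eqP Ex /eqP Ey]];
        by move: ncd; rewrite -Ex -Ey xC yC.
    by move: (Ta C U S); rewrite CT.
have W := weight_exchange (T2 := T2) (fun x y => erefl) Ts Tab Tcd ab cd.
have := Mst T2 ST; lra.
Qed.

End Metric.

Unset Implicit Arguments.
Set Strict Implicit.

Theorem lemma6 (R : rcfType) (D : nat) (V : finType) (pt : V -> 'rV[R]_D)
  (t : R) (G T : rel V) (m : nat) (T1 T2 : {set V}) (p q x y : V) (g : seq V) :
  injective pt ->
  1 <= t ->
  simple_graph G ->
  t_spanner pt t G ->
  is_MST pt G T ->
  (1 <= m)%N -> (m <= #|V| - 1)%N ->
  subtree T T1 -> subtree T T2 ->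
  [disjoint T1 & T2] ->
  (#|T1| <= m)%N -> (#|T2| <= m)%N ->
  p \in T1 -> q \in T2 ->
  is_walk T p q g -> uniq (p :: g) ->
  x \in T1 -> x \in p :: g ->
  y \in T2 -> y \in p :: g ->
  vdist pt x y <= (2 * t * (m%:R - 1) + 1) * vdist pt p q.
Proof.
move=> _ t1 Gsg Gsp MST m1 _ st1 st2 _ c1 c2 pT1 qT2 /andP [Pg /eqP Lg] U xT1 xg yT2 yg.
have [[Tsg [TG [Tc Ta]]] _] := MST.
set K := t * vdist pt p q.
have edgeK : forall s1 b s2, g = s1 ++ b :: s2 -> vdist pt (last p s1) b <= K.
  move=> s1 b s2 Eg; rewrite /K -Lg.
  move: Pg U; rewrite Eg => Pg U.
  apply: (EB Gsg Gsp MST).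
    by move: Pg; rewrite cat_path => /andP [_ /= /andP [H _]].
  apply: Lsplit Tsg Ta Pg U (mem_head _ _) _.
  by rewrite last_cat /= mem_last.
have [g1 [g2 [Eg1 Ex]]] := in_split_last xg.
have Pg1 : path T p g1 by move: Pg; rewrite Eg1 cat_path => /andP [].
have U1 : uniq (p :: g1) by move: U; rewrite Eg1 -cat_cons cat_uniq => /andP [].
have C1 : connect (fun a b => [&& T a b, a \in T1 & b \in T1]) p (last p g1).
  by rewrite -Ex; exact: st1.
have A1 := Pref Tsg Ta Pg1 U1 C1.
have sz1 : (size (p :: g1) <= m)%N.
  apply: leq_trans c1; rewrite -(card_uniqP U1); apply: subset_leq_card.
  apply/subsetP => z; rewrite in_cons => /orP [/eqP -> //| zin]; exact: (allP A1).
have dx : vdist pt p x <= (size g1)%:R * K.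
  rewrite Ex; apply: le_trans (walk_tri _ _ _) (walk_bound _).
  move=> [a b] /zip_split [s1 [s2 [E1 ->]]]; apply: (edgeK s1 b (s2 ++ g2)).
  by rewrite Eg1 E1 -catA.
have [h1 [h2 [Eg2 Ey]]] := in_split_last yg.
have Ph2 : path T y h2 by rewrite Ey; move: Pg; rewrite Eg2 cat_path => /andP [].
have Uh2 : uniq (y :: h2).
  move: U; rewrite Eg2 -cat_cons cat_uniq => /and3P [_ Hn Uh].
  rewrite /= Uh andbT; apply/negP => yh; move/negP: Hn; apply; apply/hasP.
  by exists y => //; rewrite Ey mem_last.
have Lh2 : last y h2 = q by rewrite -Lg Eg2 last_cat -Ey.
have C2 : connect (fun a b => [&& T a b, a \in T2 & b \in T2]) y (last y h2).
  by rewrite Lh2; exact: st2.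
have A2 := Pref Tsg Ta Ph2 Uh2 C2.
have sz2 : (size (y :: h2) <= m)%N.
  apply: leq_trans c2; rewrite -(card_uniqP Uh2); apply: subset_leq_card.
  apply/subsetP => z; rewrite in_cons => /orP [/eqP -> //| zin]; exact: (allP A2).
have dy : vdist pt y q <= (size h2)%:R * K.
  rewrite -Lh2; apply: le_trans (walk_tri _ _ _) (walk_bound _).
  move=> [a b] /zip_split [s1 [s2 [E1 ->]]].
  have := edgeK (h1 ++ s1) b s2; rewrite last_cat -Ey; apply.
  by rewrite Eg2 E1 catA.
have K0 : 0 <= K by rewrite /K mulr_ge0 ?vdist_ge0 //; lra.
have n1 : (size g1)%:R <= m%:R - 1 :> R.
  have : ((size g1)%:R + 1 <= m%:R :> R) by rewrite natr1 ler_nat.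
  lra.
have n2 : (size h2)%:R <= m%:R - 1 :> R.
  have : ((size h2)%:R + 1 <= m%:R :> R) by rewrite natr1 ler_nat.
  lra.
have e1 := ler_wpM2r K0 n1.
have e2 := ler_wpM2r K0 n2.
have E : (2 * t * (m%:R - 1) + 1) * vdist pt p q = (m%:R - 1) * K + vdist pt p q + (m%:R - 1) * K.
  by rewrite /K; ring.
rewrite E.
have tr1 := vdist_tri pt x p y.
have tr2 := vdist_tri pt p q y.
rewrite (vdist_sym pt x p) in tr1.
rewrite (vdist_sym pt q y) in tr2.
move: dx dy e1 e2 tr1 tr2.
set A := (size g1)%:R * K. set B := (size h2)%:R * K. set M := (m%:R - 1) * K.
lra.
Qed.
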